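(* Let $k\ge2$ be an integer and $\lambda$ a real number with $0<\lambda<\frac{2}{k+1}$. Then the Poisson distribution of order $k$ with parameter $\lambda$ has the unique mode $0$, i.e. $f_k(0;\lambda)>f_k(n;\lambda)$ for every integer $n\ge1$.
   Context: For an integer $k\ge1$ and a real $\lambda>0$, the Poisson distribution of order $k$ with parameter $\lambda$ is the distribution on $\{0,1,2,\dots\}$ with probability mass function $$f_k(n;\lambda)=e^{-k\lambda}\sum_{\substack{n_1,\dots,n_k\ge 0\\ n_1+2n_2+\dots+kn_k=n}}\frac{\lambda^{n_1+\dots+n_k}}{n_1!\cdots n_k!},\qquad n=0,1,2,\dots$$ A mode is any $n$ at which $f_k(n;\lambda)$ attains its global maximum over $n\ge0$. *)

(* Defs.v *)
From mathcomp Require Import all_boot all_order all_algebra.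
From mathcomp Require Import all_classical all_reals all_analysis.
Set Implicit Arguments. Unset Strict Implicit. Unset Printing Implicit Defensive.
Import Order.TTheory GRing.Theory Num.Theory.
Local Open Scope ring_scope.

(* The tuple (n_1,...,n_k) is encoded as m : {ffun 'I_k -> 'I_n.+1}
   with n_j = m (j-1) (each n_j <= n necessarily, so nothing is lost). *)
Definition poisson_order_pmf (R : realType) (k : nat) (lam : R) (n : nat) : R :=
  expR (- (k%:R * lam)) *
  \sum_(m : {ffun 'I_k -> 'I_n.+1} |
          (\sum_(j < k) (j.+1 * m j)%N)%N == n)
     (lam ^+ (\sum_(j < k) (m j : nat))%N /
      (\prod_(j < k) ((m j : nat)`!)%:R)).

(* Main.v *)
Require Import Defs.
From mathcomp Require Import all_boot all_order all_algebra.
From mathcomp Require Import all_classical all_reals all_analysis.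
From mathcomp Require Import ring lra zify.
Import Order.TTheory GRing.Theory Num.Theory.
Set Implicit Arguments. Unset Strict Implicit. Unset Printing Implicit Defensive.
Local Open Scope ring_scope.

Definition cc (R : realType) (lam : R) (a : nat) : R := lam ^+ a / (a`!)%:R.
Definition Qf (R : realType) (lam : R) (N j : nat) : {poly R} :=
  \sum_(a < N) cc lam a *: 'X^(j.+1 * a)%N.
Definition PP (R : realType) (lam : R) (k N : nat) : {poly R} :=
  \prod_(j < k) Qf lam N j.

Lemma prod_scaleX (R : realType) (k : nat) (c : 'I_k -> R) (e : 'I_k -> nat) :
  \prod_(j < k) (c j *: 'X^(e j)) = (\prod_(j < k) c j) *: 'X^(\sum_(j < k) e j).
Proof.
rewrite -prodrXr -mul_polyC rmorph_prod -big_split /=.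
by apply: eq_bigr => j _; rewrite mul_polyC.
Qed.

Lemma sumA (R : realType) (k N n : nat) (lam : R) :
  \sum_(m : {ffun 'I_k -> 'I_N} | (\sum_(j < k) (j.+1 * m j)%N)%N == n)
     (lam ^+ (\sum_(j < k) (m j : nat))%N /
      (\prod_(j < k) ((m j : nat)`!)%:R)) = (PP lam k N)`_n.
Proof.
rewrite /PP /Qf bigA_distr_bigA /= coef_sum big_mkcond /=.
apply: eq_bigr => m _.
rewrite prod_scaleX coefZ coefXn eq_sym.
case: eqP => _; last by rewrite mulr0.
rewrite mulr1 /cc prodf_div -prodrXr //.
Qed.
Lemma ccS (R : realType) (lam : R) a : cc lam a.+1 * (a.+1)%:R = lam * cc lam a.
Proof.
rewrite /cc factS natrM exprS.
have h1 : (a`!)%:R != 0 :> R by rewrite pnatr_eq0 -lt0n fact_gt0.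
have h2 : (a.+1)%:R != 0 :> R by rewrite pnatr_eq0.
field; rewrite h1 /= addrC natr1; exact: h2.
Qed.

Lemma derQ (R : realType) (lam : R) N j :
  'X * (Qf lam N j)^`() = (lam * (j.+1)%:R) *: ('X^(j.+1) * Qf lam N j)
     - (cc lam N * (j.+1 * N)%N%:R) *: 'X^(j.+1 * N).
Proof.
set f := fun a : nat => (cc lam a * (j.+1 * a)%N%:R) *: ('X^(j.+1 * a) : {poly R}).
have h1 : 'X * (Qf lam N j)^`() = \sum_(a < N) f a.
  rewrite /Qf raddf_sum mulr_sumr; apply: eq_bigr => a _.
  rewrite /= derivZ derivXn /f -scalerAr.
  case e: (j.+1 * a)%N => [|e'] /=.
    by rewrite mulr0 scaler0 mulr0 scale0r.
  have -> : 'X * ('X^e' *+ e'.+1) = 'X^(e'.+1) *+ e'.+1 :> {poly R}.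
    by rewrite mulrnAr exprS.
  by rewrite -scalerMnr scalerMnl mulr_natr.
have h2 : \sum_(a < N.+1) f a = \sum_(a < N) f a.+1.
  by rewrite big_ord_recl /f muln0 mulr0 scale0r add0r.
rewrite h1; apply/eqP; rewrite eq_sym subr_eq -(big_ord_recr N f) /= h2.
rewrite /Qf mulr_sumr scaler_sumr; apply/eqP; apply: eq_bigr => a _.
rewrite /f -scalerAr scalerA -exprD -mulnS.
congr (_ *: _).
by rewrite [in RHS]natrM [in RHS]mulrCA ccS; ring.
Qed.

Definition low (R : realType) (N : nat) (p : {poly R}) := forall i, (i < N)%N -> p`_i = 0.

Lemma lowD (R : realType) N (p q : {poly R}) : low N p -> low N q -> low N (p + q).
Proof. by move=> hp hq i hi; rewrite coefD hp ?hq ?addr0. Qed.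

Lemma lowN (R : realType) N (p : {poly R}) : low N p -> low N (- p).
Proof. by move=> hp i hi; rewrite coefN hp ?oppr0. Qed.

Lemma lowMr (R : realType) N (p q : {poly R}) : low N p -> low N (p * q).
Proof.
move=> hp i hi; rewrite coefM big1 // => j _.
by rewrite hp ?mul0r //; apply: leq_ltn_trans hi; rewrite -ltnS.
Qed.

Lemma lowMl (R : realType) N (p q : {poly R}) : low N q -> low N (p * q).
Proof. by move=> h; rewrite mulrC; apply: lowMr. Qed.

Definition LL (R : realType) (lam : R) (k : nat) : {poly R} :=
  \sum_(j < k) (lam * (j.+1)%:R) *: 'X^(j.+1).

Lemma derP (R : realType) (lam : R) (k N : nat) :
  low N ('X * (PP lam k N)^`() - LL lam k * PP lam k N).
Proof.
elim: k => [|k IH].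
  by rewrite /PP /LL big_ord0 big_ord0 derivC mulr0 mul0r subrr => i _; rewrite coef0.
rewrite /PP /LL big_ord_recr big_ord_recr /= -/(PP lam k N) -/(LL lam k).
set A := PP lam k N; set B := Qf lam N k; set L := LL lam k.
set l := (lam * (k.+1)%:R) *: ('X^(k.+1) : {poly R}).
have e : 'X * (A * B)^`() - (L + l) * (A * B) =
   ('X * A^`() - L * A) * B + A * ('X * B^`() - l * B).
  by rewrite derivM; ring.
rewrite e; apply: lowD; first exact: lowMr.
apply: lowMl; rewrite derQ /l -scalerAl -/B.
rewrite addrAC subrr add0r; apply: lowN.
move=> i hi; rewrite coefZ coefXn.
have : i != (k.+1 * N)%N by rewrite neq_ltn; apply/orP; left; apply: leq_trans hi _; rewrite leq_pmull.
by move/negbTE => ->; rewrite mulr0.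
Qed.

Lemma recP (R : realType) (lam : R) (k N m : nat) : (0 < m)%N -> (m < N)%N ->
  m%:R * (PP lam k N)`_m = \sum_(j < k) (lam * (j.+1)%:R) *
     (if (m < j.+1)%N then 0 else (PP lam k N)`_(m - j.+1)).
Proof.
move=> m0 mN; have := @derP R lam k N m mN; move/eqP; rewrite coefB subr_eq0 => /eqP.
rewrite coefXM; case: eqP => [m00|_]; first by rewrite m00 in m0.
rewrite coef_deriv prednK // mulr_natl => ->.
rewrite /LL mulr_suml coef_sum; apply: eq_bigr => j _.
by rewrite -scalerAl coefZ coefXnM.
Qed.

Lemma coef0P (R : realType) (lam : R) (k N : nat) : (0 < N)%N -> (PP lam k N)`_0 = 1.
Proof.
case: N => // N' _; rewrite /PP; elim: k => [|k IH]; first by rewrite big_ord0 coef1.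
rewrite big_ord_recr /= coef0M IH mul1r /Qf coef_sum.
rewrite big_ord_recl /= muln0 coefZ coefXn eqxx mulr1.
rewrite big1 ?addr0; first by rewrite /cc expr0 fact0 divr1.
by move=> a _; rewrite coefZ coefXn /= mulr0.
Qed.

Lemma natsum (k m : nat) :
  (2 * \sum_(j < k) (if (m < j.+1)%N then 0 else j.+1) = minn k m * (minn k m).+1)%N.
Proof.
elim: k => [|k IH]; first by rewrite big_ord0 min0n.
rewrite big_ord_recr /= mulnDr IH.
case: ltnP => h.
  have e1 : minn k m = m by apply/minn_idPr; lia.
  have e2 : minn k.+1 m = m by apply/minn_idPr; lia.
  by rewrite e1 addn0.
have e1 : minn k m = k by apply/minn_idPl; lia.
have e2 : minn k.+1 m = k.+1 by apply/minn_idPl; lia.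
rewrite e1; nia.
Qed.

Lemma step (R : realType) (lam : R) (k N m : nat) : 0 < lam -> lam * (k.+1)%:R < 2 ->
  (0 < m)%N -> (m < N)%N -> (forall i, (i < m)%N -> (PP lam k N)`_i <= 1) ->
  (PP lam k N)`_m < 1.
Proof.
move=> l0 lK m0 mN hi.
set S := (\sum_(j < k) (if (m < j.+1)%N then 0 else j.+1))%N.
have h1 : m%:R * (PP lam k N)`_m <= lam * S%:R.
  rewrite recP // /S natr_sum mulr_sumr; apply: ler_sum => j _.
  case: ifP => h; first by rewrite mulr0 mulr0.
  rewrite -[X in _ <= X]mulr1; apply: ler_wpM2l.
    by apply: mulr_ge0; [exact: ltW | exact: ler0n].
  by apply: hi; lia.
have h2n : (2 * S <= m * k.+1)%N.
  rewrite /S natsum; apply: leq_mul; [exact: geq_minr | rewrite ltnS; exact: geq_minl].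
have h2 : (2 * S)%N%:R <= (m * k.+1)%N%:R :> R by rewrite ler_nat.
rewrite !natrM in h2.
have h3 : lam * (2 * S%:R) <= lam * (m%:R * (k.+1)%:R) by apply: ler_wpM2l => //; exact: ltW.
have M0 : 0 < m%:R :> R by rewrite ltr0n.
have h4 : m%:R * (lam * (k.+1)%:R) < m%:R * 2 by rewrite ltr_pM2l.
have h5 : m%:R * (PP lam k N)`_m < m%:R * 1 by nra.
by rewrite ltr_pM2l in h5.
Qed.

Theorem mainTheorem3 (R : realType) (k : nat) (lam : R) :
  (2 <= k)%N -> 0 < lam -> lam < 2 / (k.+1)%:R ->
  forall n : nat, (1 <= n)%N ->
    poisson_order_pmf k lam n < poisson_order_pmf k lam 0.
Proof.
move=> k2 l0 lk n n1.
have lK : lam * (k.+1)%:R < 2.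
  have K0 : 0 < (k.+1)%:R :> R by rewrite ltr0n.
  by rewrite -(ltr_pdivlMr _ _ K0).
have all : forall m, (m <= n)%N -> (PP lam k n.+1)`_m <= 1.
  elim/ltn_ind => m IHm hm.
  case: m IHm hm => [|m] IHm hm; first by rewrite coef0P.
  apply: ltW; apply: step => // i hi; apply: IHm => //; lia.
have hn : (PP lam k n.+1)`_n < 1.
  by apply: step => // i hi; apply: all; lia.
rewrite /poisson_order_pmf !sumA coef0P // mulr1.
by rewrite -[X in _ < X]mulr1 ltr_pM2l // expR_gt0.
Qed.
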